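(* Let ancillae $A_1,\dots,A_n$ ($n\ge2$) consecutively measure a $d$-dimensional prepared quantum system $Q$, and let detectors $D_1,\dots,D_n$ amplify them. Then the information the last device has about the previous device is reduced by amplification: $$S(D_n:D_{n-1})\le S(A_n:A_{n-1}),$$ where the left side is computed in the amplified state and the right side in the unamplified state.
   Context: $Q$ is $d$-dimensional, initially in $|Q\rangle=\sum_{x_1}\alpha^{(1)}_{x_1}|\widetilde{x}_1\rangle$. Ancilla $A_i$ ($d$-dimensional, basis $\{|x\rangle\}$, initially $|0\rangle$) measures $Q$ in the orthonormal basis $\{|\widetilde{x}_i\rangle\}$ via $\sum_x|\widetilde{x}_i\rangle\langle\widetilde{x}_i|\otimes U_x$, $U_x|0\rangle=|x\rangle$; with unitary $U^{(i)}_{x_{i-1}x_i}=\langle\widetilde{x}_i|\widetilde{x}_{i-1}\rangle$ the unamplified state is $\sum_{x_1,\dots,x_n}\alpha^{(1)}_{x_1}U^{(2)}_{x_1x_2}\cdots U^{(n)}_{x_{n-1}x_n}|\widetilde{x}_n\rangle_Q|x_1\rangle_{A_1}\cdots|x_n\rangle_{A_n}$. Amplification: detector $D_i$ (initially $|0\rangle$) copies $A_i$, $|x\rangle_{A_i}|0\rangle_{D_i}\mapsto|x\rangle_{A_i}|x\rangle_{D_i}$. Entropies are von Neumann (log base $d$) of reduced states; $S(X:Y)=S(X)+S(Y)-S(XY)$. *)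

(* Defs.v *)
From HB Require Import structures.
From mathcomp Require Import all_boot all_order all_algebra.
From mathcomp Require Import reals exp.
From mathcomp Require Import complex.
Set Implicit Arguments. Unset Strict Implicit. Unset Printing Implicit Defensive.
Import Order.TTheory GRing.Theory Num.Theory.
Local Open Scope ring_scope.

Section QDefs.
Variable R : realType.
Local Notation C := R[i].

(* A composite system has a finite set of subsystem labels [L]; every  *)
(* subsystem is d-dimensional with computational basis 'I_d, so a basis *)
(* vector of the whole system is a configuration {ffun L -> 'I_d}, and   *)
(* a pure state is given by its coordinates psi : config -> C.          *)

Definition restr (L : finType) (d : nat) (S : {set L}) (x : {ffun L -> 'I_d})
  : {ffun {l : L | l \in S} -> 'I_d} := [ffun l => x (val l)].
Arguments restr {L d} S x.

(* reduced density matrix of |psi><psi| on the subsystems S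
   (partial trace over all subsystems outside S) *)
Definition reduced (L : finType) (d : nat) (psi : {ffun L -> 'I_d} -> C)
  (S : {set L}) (k k' : {ffun {l : L | l \in S} -> 'I_d}) : C :=
  \sum_(x : {ffun L -> 'I_d} | restr S x == k)
    \sum_(y : {ffun L -> 'I_d} | (restr S y == k') &&
                                 [forall l, (l \notin S) ==> (x l == y l)])
      psi x * (psi y)^*.
Arguments reduced {L d} psi S k k'.

Definition opmx (K : finType) (f : K -> K -> C) : 'M[C]_#|K| :=
  \matrix_(i, j) f (enum_val i) (enum_val j).

Definition eigs (m : nat) (A : 'M[C]_m) : seq C :=
  sval (closed_field_poly_normal (char_poly A)).

Definition xlogx (b t : R) : R := if t == 0 then 0 else t * (ln t / ln b).

Definition vN_entropy (b : R) (m : nat) (rho : 'M[C]_m) : R :=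
  - \sum_(z <- eigs rho) xlogx b (complex.Re z).

Definition Ssub (L : finType) (d : nat) (psi : {ffun L -> 'I_d} -> C)
  (S : {set L}) : R :=
  vN_entropy d%:R (opmx (reduced psi S)).

Definition mutinf (L : finType) (d : nat) (psi : {ffun L -> 'I_d} -> C)
  (X Y : {set L}) : R :=
  Ssub psi X + Ssub psi Y - Ssub psi (X :|: Y).

Definition unitary (m : nat) (A : 'M[C]_m) : Prop :=
  (\matrix_(i, j) (A j i)^*) *m A = 1%:M.

(* Unamplified system: Q and the ancillae A_1..A_n.
   Labels: None = Q, Some k = A_(k+1)  (k : 'I_n). *)
Definition labU (n : nat) := option 'I_n.
Definition lQ (n : nat) : labU n := None.
Definition lA (n : nat) (j : nat) : labU n :=
  if (insub j.-1 : option 'I_n) is Some k then Some k else None.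

(* Amplified system: Q, A_1..A_n, D_1..D_n.
   Labels: None = Q, Some (inl k) = A_(k+1), Some (inr k) = D_(k+1). *)
Definition labAmp (n : nat) := option ('I_n + 'I_n)%type.
Definition lAa (n : nat) (j : nat) : labAmp n := omap inl (lA n j).
Definition lDa (n : nat) (j : nat) : labAmp n := omap inr (lA n j).

Variables (n d : nat).
(* alpha = coordinates of the initial |Q> in the basis {|x~_1>};
   B i = the matrix whose column x is the vector |x~_i> (i = 1..n),
   written in the computational basis of Q. *)
Variables (alpha : 'I_d -> C) (B : nat -> 'M[C]_d).

(* U^(i)_(x_(i-1) x_i) = < x~_i | x~_(i-1) > *)
Definition Umat (i : nat) (x y : 'I_d) : C :=
  \sum_(q : 'I_d) (B i q y)^* * B i.-1 q x.

(* the unamplified state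
   sum_x alpha_x1 U^(2)_(x1 x2) ... U^(n)_(x(n-1) xn) |x~_n>_Q |x1>...|xn>,
   coordinates in the computational basis of Q ⊗ A_1 ⊗ ... ⊗ A_n *)
Definition unamp_state (c : {ffun labU n -> 'I_d}) : C :=
  B n (c (lQ n)) (c (lA n n)) * alpha (c (lA n 1)) *
  \prod_(2 <= j < n.+1) Umat j (c (lA n j.-1)) (c (lA n j)).

(* the amplified state: each D_i (initially |0>) copies A_i,
   |x>_(A_i)|0>_(D_i) |-> |x>_(A_i)|x>_(D_i), applied to the unamplified state *)
Definition amp_state (c : {ffun labAmp n -> 'I_d}) : C :=
  if [forall k : 'I_n, c (Some (inr k)) == c (Some (inl k))]
  then unamp_state [ffun l => c (omap inl l)]
  else 0.

End QDefs.

(* Main.v *)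
Require Import Defs.
From HB Require Import structures.
From mathcomp Require Import all_boot all_order all_algebra.
From mathcomp Require Import reals exp.
From mathcomp Require Import complex.
From mathcomp Require Import ring lra zify.
Import Order.TTheory GRing.Theory Num.Theory.
Local Open Scope ring_scope.
Set Implicit Arguments. Unset Strict Implicit. Unset Printing Implicit Defensive.
Section P1.
Variable R : realType.

Lemma phi_lb (d p : R) : 0 <= d -> 0 < p -> d * ln p + d - p <= d * ln d.
Proof.
move=> d0 p0; have [->|dpos] := eqVneq d 0; first by rewrite !mul0r add0r subr_le0 ltW.
have dp : 0 < d by rewrite lt_def dpos d0.
have h := @le_ln1Dx R (p / d - 1).
have h1 : -1 < p / d - 1 by rewrite -subr_gt0 opprK subrK divr_gt0.
have := h h1; rewrite addrC subrK lnM ?invr_gt0 // ?lnV //; last by rewrite posrE invr_gt0.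
move=> hh.
have : d * (ln p - ln d) <= d * (p / d - 1) by rewrite ler_pM2l.
have -> : d * (p / d - 1) = p - d by field.
lra.
Qed.

Lemma jensen_xlnx (I : finType) (w dd : I -> R) :
  (forall i, 0 <= w i) -> (forall i, 0 <= dd i) -> \sum_i w i = 1 ->
  (\sum_i w i * dd i) * ln (\sum_i w i * dd i) <= \sum_i w i * (dd i * ln (dd i)).
Proof.
move=> w0 d0 w1; set p := \sum_i _.
have p0 : 0 <= p by apply: sumr_ge0 => i _; rewrite mulr_ge0.
have [pz|pp] := eqVneq p 0.
  have hz := (psumr_eq0P (fun i _ => mulr_ge0 (w0 i) (d0 i)) pz).
  rewrite pz mul0r big1 // => i _; rewrite mulrA hz //.
  by rewrite mul0r.
have ppos : 0 < p by rewrite lt_def pp p0.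
apply: (@le_trans _ _ (\sum_i w i * (dd i * ln p + dd i - p))).
  rewrite (eq_bigr (fun i => (w i * dd i) * ln p + w i * dd i - w i * p)); last first.
    by move=> i _; ring.
  rewrite big_split /= big_split /= -mulr_suml -/p sumrN -mulr_suml w1 mul1r.
  by rewrite addrK.
by apply: ler_sum => i _; apply: ler_wpM2l => //; apply: phi_lb.
Qed.

Lemma doubly_stoch (I : finType) (W : I -> I -> R) (dd : I -> R) :
  (forall i j, 0 <= W i j) -> (forall j, \sum_i W i j = 1) ->
  (forall i, \sum_j W i j = 1) -> (forall i, 0 <= dd i) ->
  \sum_j (\sum_i W i j * dd i) * ln (\sum_i W i j * dd i)
    <= \sum_i dd i * ln (dd i).
Proof.
move=> W0 c1 r1 d0.
apply: (@le_trans _ _ (\sum_j \sum_i W i j * (dd i * ln (dd i)))).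
  by apply: ler_sum => j _; apply: jensen_xlnx.
rewrite exchange_big /=; rewrite le_eqVlt; apply/orP; left; apply/eqP/eq_bigr => i _.
by rewrite -mulr_suml r1 mul1r.
Qed.
End P1.
Section P2.

Lemma char_poly_sim (F : fieldType) m (P M : 'M[F]_m) : P \in unitmx ->
  char_poly (invmx P *m M *m P) = char_poly M.
Proof.
move=> Pu; rewrite /char_poly /char_poly_mx.
have hPP : map_mx polyC (invmx P) *m map_mx polyC P = 1%:M.
  by rewrite -map_mxM mulVmx // map_mx1.
have -> : 'X%:M - map_mx polyC (invmx P *m M *m P) =
   map_mx polyC (invmx P) *m ('X%:M - map_mx polyC M) *m map_mx polyC P.
  rewrite !map_mxM mulmxBr mulmxBl; congr (_ - _).
  by rewrite scalar_mxC -mulmxA hPP mulmx1.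
rewrite !det_mulmx mulrC mulrA -det_mulmx.
have h1 : \det (map_mx polyC (invmx P)) * \det (map_mx polyC P) = 1.
  by rewrite -det_mulmx hPP det1.
by rewrite det_mulmx (mulrC (\det (map_mx polyC P))) h1 mul1r.
Qed.
End P2.
Section P3.
Variable R : realType.
Local Notation C := R[i].

Lemma eigs_sum m (A : 'M[C]_m) (c : 'I_m -> C) (G : C -> R) :
  char_poly A = \prod_i ('X - (c i)%:P) -> \sum_(z <- eigs A) G z = \sum_i G (c i).
Proof.
rewrite /eigs; case: closed_field_poly_normal => r /= hr hc.
have := char_poly_monic A; rewrite monicE => /eqP hl.
rewrite hl scale1r hc in hr.
have hp : perm_eq r [seq c i | i <- enum 'I_m].
  apply: prod_XsubC_eq; rewrite big_map -hr.
  by rewrite big_enum.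
by rewrite (perm_big _ hp) big_map big_enum.
Qed.
End P3.
Section P4.
Variable R : realType.
Local Notation C := R[i].
Local Open Scope sesquilinear_scope.

Lemma Re_sum (I : Type) (s : seq I) (P : pred I) (F : I -> C) :
  complex.Re (\sum_(i <- s | P i) F i) = \sum_(i <- s | P i) complex.Re (F i).
Proof.
by apply: (big_morph (@complex.Re R)) => // [[a b] [c d]].
Qed.

Lemma ge0_realC (x : C) : 0 <= x -> x = ((complex.Re x)%:C)%C /\ 0 <= complex.Re x.
Proof.
rewrite lecE; case: x => a b /= /andP[/eqP b0 a0]; split => //.
by rewrite b0.
Qed.

Lemma ReM_real (a b : R) : complex.Re ((a%:C)%C * (b%:C)%C) = a * b.
Proof. by rewrite /= mulr0 subr0. Qed.

Lemma spectral_ineq m (A : 'M[C]_m) (I : finType) (P : pred I) (v : I -> 'I_m -> C) :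
  (forall i j, A i j = \sum_(w | P w) v w i * (v w j)^*) ->
  \sum_j complex.Re (A j j) * ln (complex.Re (A j j))
    <= \sum_(z <- eigs A) complex.Re z * ln (complex.Re z).
Proof.
move=> hA.
have hT : A ^t* = A.
  apply/matrixP => i j; rewrite !mxE !hA rmorph_sum; apply: eq_bigr => w _.
  by rewrite rmorphM /= conjCK mulrC.
have hn : A \is normalmx by apply/normalmxP; rewrite hT.
move/orthomx_spectralP: hn.
set Pm := spectralmx A; set D := spectral_diag A => hA'.
have Pu : Pm \is unitarymx := spectral_unitarymx A.
have PPt : Pm *m Pm ^t* = 1%:M by apply/unitarymxP.
have PtP : Pm ^t* *m Pm = 1%:M by apply: mulmx1C.
have hinv : invmx Pm = Pm ^t* := invmx_unitary Pu.
have hcp : char_poly A = \prod_i ('X - (D 0 i)%:P).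
  rewrite hA' char_poly_sim ?spectral_unit // char_poly_trig ?diag_mx_is_trig //.
  by apply: eq_bigr => i _; rewrite mxE eqxx mulr1n.
rewrite (eigs_sum (fun z => complex.Re z * ln (complex.Re z)) hcp).
have hD : diag_mx D = Pm *m A *m Pm ^t*.
  by rewrite {1}hA' hinv !mulmxA PPt mul1mx -mulmxA PPt mulmx1.
have Dge0 : forall i, 0 <= D 0 i.
  move=> i.
  have -> : D 0 i = diag_mx D i i by rewrite mxE eqxx mulr1n.
  rewrite hD mxE.
  have -> : \sum_j (Pm *m A) i j * (Pm ^t*) j i =
     \sum_(w | P w) (\sum_j Pm i j * v w j) * (\sum_j Pm i j * v w j)^*.
    rewrite (eq_bigr (fun j => \sum_k \sum_(w | P w)
         Pm i k * v w k * ((v w j)^* * (Pm i j)^*))); last first.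
      move=> j _; rewrite !mxE mulr_suml; apply: eq_bigr => k _.
      rewrite hA mulr_sumr mulr_suml; apply: eq_bigr => w _; ring.
    rewrite [RHS](eq_bigr (fun w => \sum_k \sum_j
         Pm i k * v w k * ((v w j)^* * (Pm i j)^*))); last first.
      move=> w _; rewrite rmorph_sum mulr_suml; apply: eq_bigr => k _.
      rewrite mulr_sumr; apply: eq_bigr => j _; rewrite rmorphM /=; ring.
    rewrite exchange_big /=; under eq_bigr do rewrite exchange_big /=.
    by rewrite exchange_big.
  by apply: sumr_ge0 => w _; apply: mul_conjC_ge0.
pose r i := complex.Re (D 0 i).
pose ww k j := complex.Re (Pm k j * (Pm k j)^*).
have hr : forall i, D 0 i = ((r i)%:C)%C /\ 0 <= r i by move=> i; apply: ge0_realC.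
have hw : forall k j, Pm k j * (Pm k j)^* = ((ww k j)%:C)%C /\ 0 <= ww k j.
  by move=> k j; apply: ge0_realC; apply: mul_conjC_ge0.
have hAjj : forall j, complex.Re (A j j) = \sum_k ww k j * r k.
  move=> j; rewrite {1}hA' hinv mul_mx_diag mxE Re_sum; apply: eq_bigr => k _.
  rewrite !mxE.
  have -> : (Pm k j)^* * D 0 k * Pm k j = (Pm k j * (Pm k j)^*) * D 0 k by ring.
  by rewrite (hw k j).1 (hr k).1 ReM_real.
have col : forall j, \sum_k ww k j = 1.
  move=> j; have := congr1 (fun M : 'M[C]_m => complex.Re (M j j)) PtP.
  rewrite /= !mxE eqxx mulr1n Re_sum => h.
  transitivity (complex.Re (1 : C)); last by [].
  rewrite -h; apply: eq_bigr => k _.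
  by rewrite !mxE mulrC.
have row : forall k, \sum_j ww k j = 1.
  move=> k; have := congr1 (fun M : 'M[C]_m => complex.Re (M k k)) PPt.
  rewrite /= !mxE eqxx mulr1n Re_sum => h.
  transitivity (complex.Re (1 : C)); last by [].
  rewrite -h; apply: eq_bigr => j _.
  by rewrite !mxE.
under eq_bigr do rewrite hAjj.
apply: doubly_stoch => //.
- by move=> i j; case: (hw i j).
- by move=> i; case: (hr i).
Qed.
End P4.
Section P5.
Variable R : realType.
Local Notation C := R[i].
Variables (L : finType) (d : nat).
Local Notation cfg := {ffun L -> 'I_d}.
Local Notation scfg S := {ffun {l : L | l \in S} -> 'I_d}.

Definition glue (S : {set L}) (k : {ffun {l : L | l \in S} -> 'I_d}) (w : cfg) : cfg :=
  [ffun l => if (insub l : option {l : L | l \in S}) is Some s then k s else w l].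

Lemma glue_in (S : {set L}) (k : scfg S) w (s : {l : L | l \in S}) : glue k w (val s) = k s.
Proof. by rewrite /glue ffunE valK. Qed.

Lemma glue_out (S : {set L}) (k : scfg S) w l : l \notin S -> @glue S k w l = w l.
Proof. by move=> h; rewrite /glue ffunE insubF //; apply/negbTE. Qed.

Lemma restr_glue (S : {set L}) (k : scfg S) w : restr S (@glue S k w) = k.
Proof. by apply/ffunP => s; rewrite ffunE glue_in. Qed.

Lemma glue_glue (S : {set L}) (k k' : scfg S) w : @glue S k (glue k' w) = glue k w.
Proof.
apply/ffunP => l; case: (boolP (l \in S)) => h.
  by rewrite -[l]/(val (Sub l h : {l : L | l \in S})) !glue_in.
by rewrite !glue_out.
Qed.

Lemma glue_id (S : {set L}) w : glue (restr S w) w = w.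
Proof.
apply/ffunP => l; case: (boolP (l \in S)) => h.
  by rewrite -[l]/(val (Sub l h : {l : L | l \in S})) !glue_in ffunE.
by rewrite !glue_out.
Qed.

Lemma glue_eq (S : {set L}) (k : scfg S) w : (@glue S k w == w) = (restr S w == k).
Proof.
apply/eqP/eqP => [<-|<-]; first by rewrite restr_glue.
exact: glue_id.
Qed.

Lemma reduced_sum (psi : cfg -> C) (S : {set L}) (k k' : scfg S) (k0 : {ffun {l : L | l \in S} -> 'I_d}) :
  @reduced _ _ _ psi S k k' =
  \sum_(w | restr S w == k0) psi (glue k w) * (psi (glue k' w))^*.
Proof.
rewrite /reduced.
rewrite (eq_bigr (fun x => psi x * (psi (glue k' x))^*)); last first.
  move=> x _; rewrite (big_pred1 (glue k' x)) // => y /=.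
  apply/andP/eqP => [[/eqP hy /forallP hf]|->].
    apply/ffunP => l; case: (boolP (l \in S)) => h.
      by rewrite -[l]/(val (Sub l h : {l : L | l \in S})) glue_in -hy ffunE.
    by rewrite glue_out //; have := hf l; rewrite h /= => /eqP.
  split; first by rewrite restr_glue.
  by apply/forallP => l; apply/implyP => h; rewrite glue_out.
rewrite (reindex_onto (glue k) (glue k0)); last first.
  by move=> x /eqP <-; rewrite glue_glue glue_id.
apply: eq_big => [w|w _]; first by rewrite restr_glue eqxx /= glue_glue glue_eq.
by rewrite glue_glue.
Qed.

Lemma reduced_diag (psi : cfg -> C) (S : {set L}) (k : scfg S) :
  @reduced _ _ _ psi S k k = \sum_(x | restr S x == k) psi x * (psi x)^*.
Proof.
rewrite (reduced_sum _ _ _ k); apply: eq_bigr => w /eqP <-.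
by rewrite glue_id.
Qed.

End P5.
Section P6.
Variable R : realType.
Local Notation C := R[i].

Lemma xlogxE (b t : R) : xlogx b t = (ln b)^-1 * (t * ln t).
Proof. by rewrite /xlogx; case: eqP => [->|_]; [rewrite !mul0r mulr0 | rewrite mulrA mulrC]. Qed.

Lemma vN_eigs (b : R) m (M : 'M[C]_m) :
  vN_entropy b M = - ((ln b)^-1 * \sum_(z <- eigs M) complex.Re z * ln (complex.Re z)).
Proof. by rewrite /vN_entropy mulr_sumr; congr (- _); apply: eq_bigr => z _; rewrite xlogxE. Qed.

Lemma sum_enum_val (K : finType) (G : K -> R) :
  \sum_(i < #|K|) G (enum_val i) = \sum_k G k.
Proof.
rewrite [RHS](reindex (fun i : 'I_#|K| => enum_val i)) //.
by apply: onW_bij; apply: enum_val_bij.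
Qed.

Lemma vN_diag (K : finType) (b : R) (f : K -> K -> C) :
  (forall k k', k != k' -> f k k' = 0) ->
  vN_entropy b (opmx f) = - \sum_k xlogx b (complex.Re (f k k)).
Proof.
move=> hf.
have hcp : char_poly (opmx f) = \prod_i ('X - (opmx f i i)%:P).
  rewrite char_poly_trig; last first.
    apply: is_diag_mx_is_trig; apply/is_diag_mxP => i j hij.
    rewrite mxE hf //; apply: contra hij => /eqP /enum_val_inj ->; done.
  by [].
rewrite /vN_entropy (eigs_sum (fun z => xlogx b (complex.Re z)) hcp).
under eq_bigr do rewrite mxE.
by rewrite (sum_enum_val (fun k => xlogx b (complex.Re (f k k)))).
Qed.

Lemma vN_reduced_le (L : finType) (d : nat) (b : R) (psi : {ffun L -> 'I_d} -> C)
   (S : {set L}) : (0 < d)%N -> 1 <= b ->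
  vN_entropy b (opmx (@reduced _ _ _ psi S)) <=
   - \sum_k xlogx b (complex.Re (@reduced _ _ _ psi S k k)).
Proof.
move=> hd hb.
pose k0 : {ffun {l : L | l \in S} -> 'I_d} := [ffun _ => Ordinal hd].
rewrite vN_eigs lerN2.
under eq_bigr do rewrite xlogxE.
rewrite -mulr_sumr; apply: ler_wpM2l; first by rewrite invr_ge0 ln_ge0.
rewrite -(sum_enum_val (fun k => complex.Re (reduced psi k k) * ln (complex.Re (reduced psi k k)))).
have := @spectral_ineq R _ (opmx (@reduced _ _ _ psi S)) _ (fun w => restr S w == k0)
   (fun w i => psi (glue (enum_val i) w)).
move=> h; apply: le_trans (h _); last first.
  by move=> i j; rewrite mxE (reduced_sum _ _ _ k0).
by rewrite le_eqVlt; apply/orP; left; apply/eqP; apply: eq_bigr => i _; rewrite mxE.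
Qed.
End P6.
Section P7.
Variable R : realType.
Local Notation C := R[i].
Variables (L : finType) (d : nat).
Local Notation cfg := {ffun L -> 'I_d}.
Local Notation scfg S := {ffun {l : L | l \in S} -> 'I_d}.

Definition upd (w : cfg) (l : L) (q : 'I_d) : cfg :=
  [ffun l' => if l' == l then q else w l'].

Lemma upd_same w l q : upd w l q l = q.
Proof. by rewrite ffunE eqxx. Qed.

Lemma upd_other w l q l' : l' != l -> upd w l q l' = w l'.
Proof. by move=> h; rewrite ffunE (negbTE h). Qed.

Lemma upd_upd w l q q' : upd (upd w l q) l q' = upd w l q'.
Proof. by apply/ffunP => l'; rewrite !ffunE; case: eqP. Qed.

Lemma upd_id w l : upd w l (w l) = w.
Proof. by apply/ffunP => l'; rewrite !ffunE; case: eqP => [->|]. Qed.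

Lemma glue_upd (S : {set L}) (k : scfg S) w l q : l \notin S ->
  glue k (upd w l q) = upd (glue k w) l q.
Proof.
move=> hl; apply/ffunP => l'; case: (boolP (l' \in S)) => h.
  have hne : l' != l by apply: contraNneq hl => <-.
  rewrite (upd_other _ _ hne).
  by rewrite -[l']/(val (Sub l' h : {l : L | l \in S})) !glue_in.
rewrite glue_out //; have [->|hne] := eqVneq l' l; first by rewrite !upd_same.
by rewrite !upd_other // glue_out.
Qed.

Lemma restr_upd (S : {set L}) w l q : l \notin S -> restr S (upd w l q) = restr S w.
Proof.
move=> hl; apply/ffunP => s; rewrite !ffunE; case: eqP => // he.
by move: (valP s); rewrite he (negbTE hl).
Qed.

Lemma split_coord (P : pred cfg) (F : cfg -> C) l (o : 'I_d) :
  (forall w q, P (upd w l q) = P w) ->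
  \sum_(w | P w) F w = \sum_(w | P w && (w l == o)) \sum_q F (upd w l q).
Proof.
move=> hP.
rewrite (partition_big (fun w : cfg => w l) predT) //=.
rewrite [RHS]exchange_big /=; apply: eq_bigr => q _.
rewrite (reindex_onto (fun w => upd w l q) (fun w => upd w l o)); last first.
  by move=> w /andP[_ /eqP <-]; rewrite upd_upd upd_id.
apply: eq_bigl => w; rewrite hP upd_same eqxx andbT upd_upd.
congr (_ && _); apply/eqP/eqP => [<-|<-]; first by rewrite upd_same.
exact: upd_id.
Qed.
End P7.
Section P8.
Variable R : realType.
Local Notation C := R[i].
Variables (n d : nat) (alpha : 'I_d -> C) (B : nat -> 'M[C]_d).
Hypothesis hn : (2 <= n)%N.
Hypothesis hd : (0 < d)%N.
Hypothesis unitB : forall i : nat, (1 <= i <= n)%N -> unitary (B i).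
Local Notation cfg := {ffun labU n -> 'I_d}.
Local Notation psi := (unamp_state alpha B).

Lemma lA_some j (h : (j.-1 < n)%N) : lA n j = Some (Ordinal h).
Proof. by rewrite /lA insubT. Qed.

Lemma lA_eq j j' : (0 < j)%N -> (0 < j')%N -> (j <= n)%N -> (j' <= n)%N ->
  (lA n j == lA n j') = (j == j').
Proof.
move=> h1 h2 h3 h4.
have e1 : (j.-1 < n)%N by lia.
have e2 : (j'.-1 < n)%N by lia.
apply/eqP/eqP => [|->] //.
rewrite (lA_some e1) (lA_some e2).
move/(congr1 (fun o => if o is Some x then val x else 0%N)) => /=; lia.
Qed.

Lemma lA_neQ j : (j <= n)%N -> lA n j != lQ n.
Proof.
move=> h; have e : (j.-1 < n)%N by lia.
by rewrite (lA_some e).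
Qed.

Lemma col_orth i a a' : (1 <= i <= n)%N ->
  \sum_q (B i q a')^* * B i q a = (a' == a)%:R.
Proof.
move=> hi; have := unitB hi; rewrite /unitary => /matrixP /(_ a' a).
by rewrite !mxE => <-; apply: eq_bigr => q _; rewrite mxE.
Qed.

Lemma row_orth i q q' : (1 <= i <= n)%N ->
  \sum_b B i q' b * (B i q b)^* = (q' == q)%:R.
Proof.
move=> hi; have := unitB hi; rewrite /unitary => /mulmx1C /matrixP /(_ q' q).
by rewrite !mxE => <-; apply: eq_bigr => b _; rewrite mxE.
Qed.

Lemma Umat_orth a a' : a != a' ->
  \sum_b Umat B n a b * (Umat B n a' b)^* = 0.
Proof.
move=> haa.
have hn1 : (1 <= n <= n)%N by lia.
have hn2 : (1 <= n.-1 <= n)%N by lia.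
rewrite /Umat.
rewrite (eq_bigr (fun b => \sum_q \sum_q' (B n.-1 q a * (B n.-1 q' a')^*) *
     (B n q' b * (B n q b)^*))); last first.
  move=> b _; rewrite rmorph_sum mulr_suml; apply: eq_bigr => q _.
  rewrite mulr_sumr; apply: eq_bigr => q' _; rewrite rmorphM /= conjCK; ring.
rewrite exchange_big /=.
rewrite (eq_bigr (fun q => B n.-1 q a * (B n.-1 q a')^*)); last first.
  move=> q _; rewrite exchange_big /=.
  rewrite (bigD1 q) //= [X in _ + X]big1 ?addr0.
    by rewrite -mulr_sumr row_orth // eqxx mulr1.
  by move=> q' hq; rewrite -mulr_sumr row_orth // (negbTE hq) mulr0.
have := col_orth a' a hn2; rewrite (negbTE haa) => h.
transitivity ((\sum_q (B n.-1 q a)^* * B n.-1 q a')^*); last by rewrite h conjC0.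
rewrite rmorph_sum; apply: eq_bigr => q _.
by rewrite rmorphM /= conjCK.
Qed.


Definition Tn (c : cfg) := alpha (c (lA n 1)) *
  \prod_(2 <= j < n.+1) Umat B j (c (lA n j.-1)) (c (lA n j)).
Definition Rn (c : cfg) := alpha (c (lA n 1)) *
  \prod_(2 <= j < n) Umat B j (c (lA n j.-1)) (c (lA n j)).

Lemma psiT c : psi c = B n (c (lQ n)) (c (lA n n)) * Tn c.
Proof. by rewrite /unamp_state /Tn mulrA. Qed.

Lemma psiR c : psi c = B n (c (lQ n)) (c (lA n n)) *
   Umat B n (c (lA n n.-1)) (c (lA n n)) * Rn c.
Proof.
rewrite psiT /Tn /Rn big_nat_recr /=; last by lia.
ring.
Qed.

Lemma Tn_upd c l q : (forall j, (0 < j <= n)%N -> lA n j != l) -> Tn (upd c l q) = Tn c.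
Proof.
move=> h; rewrite /Tn upd_other; last by apply: h; lia.
congr (_ * _); apply: eq_big_nat => j hj.
by rewrite !upd_other //; apply: h; lia.
Qed.

Lemma Rn_upd c l q : (forall j, (0 < j < n)%N -> lA n j != l) -> Rn (upd c l q) = Rn c.
Proof.
move=> h; rewrite /Rn upd_other; last by apply: h; lia.
congr (_ * _); apply: eq_big_nat => j hj.
by rewrite !upd_other //; apply: h; lia.
Qed.


Local Notation scfg S := {ffun {l : labU n | l \in S} -> 'I_d}.

Lemma single_neq (l0 : labU n) (k k' : scfg [set l0]) : k != k' ->
  k (Sub l0 (set11 l0)) != k' (Sub l0 (set11 l0)).
Proof.
apply: contra => /eqP e; apply/eqP/ffunP => s.
have -> : s = Sub l0 (set11 l0) by apply: val_inj => /=; apply/set1P; exact: (valP s).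
exact: e.
Qed.

Lemma hQnotin j : (j <= n)%N -> lQ n \notin [set lA n j].
Proof. by move=> h; rewrite in_set1 eq_sym lA_neQ. Qed.

Lemma offdiag_An (k k' : scfg [set lA n n]) : k != k' ->
  @reduced _ _ _ psi [set lA n n] k k' = 0.
Proof.
move=> hk; pose s0 : {l | l \in [set lA n n]} := Sub (lA n n) (set11 _).
have ha := single_neq hk.
have hn1 : (1 <= n <= n)%N by lia.
rewrite (reduced_sum _ _ _ k) (@split_coord _ _ _ _ _ (lQ n) (Ordinal hd)); last first.
  by move=> w q; rewrite restr_upd // hQnotin.
apply: big1 => w _.
have g0 : forall kk : scfg [set lA n n], glue kk w (lA n n) = kk s0 := fun kk => glue_in kk w s0.
rewrite (eq_bigr (fun q => ((B n q (k' s0))^* * B n q (k s0)) *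
     (Tn (glue k w) * (Tn (glue k' w))^*))); last first.
  move=> q _; rewrite !glue_upd ?hQnotin // !psiT !upd_same !upd_other ?lA_neQ //.
  rewrite !Tn_upd ?g0; try by move=> j hj; apply: lA_neQ; lia.
  rewrite rmorphM /=; ring.
by rewrite -mulr_suml col_orth // eq_sym (negbTE ha) mul0r.
Qed.


Lemma offdiag_An1 (k k' : scfg [set lA n n.-1]) : k != k' ->
  @reduced _ _ _ psi [set lA n n.-1] k k' = 0.
Proof.
move=> hk; pose s1 : {l | l \in [set lA n n.-1]} := Sub (lA n n.-1) (set11 _).
have ha := single_neq hk.
have hn1 : (1 <= n <= n)%N by lia.
have h1 : lA n n != lQ n by apply: lA_neQ.
have h2 : lA n n.-1 != lQ n by apply: lA_neQ; lia.
have h3 : lA n n.-1 != lA n n by rewrite lA_eq; lia.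
have hAn : lA n n \notin [set lA n n.-1] by rewrite in_set1 eq_sym.
rewrite (reduced_sum _ _ _ k) (@split_coord _ _ _ _ _ (lQ n) (Ordinal hd)); last first.
  by move=> w q; rewrite restr_upd // hQnotin //; lia.
rewrite (@split_coord _ _ _ _ _ (lA n n) (Ordinal hd)); last first.
  by move=> w q; rewrite restr_upd // upd_other // eq_sym.
apply: big1 => w _.
have g1 : forall kk : scfg [set lA n n.-1], glue kk w (lA n n.-1) = kk s1 :=
  fun kk => glue_in kk w s1.
rewrite (eq_bigr (fun b => (Umat B n (k s1) b * (Umat B n (k' s1) b)^*) *
     (Rn (glue k w) * (Rn (glue k' w))^*))); last first.
  move=> b _.
  rewrite (eq_bigr (fun q => ((B n q b)^* * B n q b) * ((Umat B n (k s1) b *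
       (Umat B n (k' s1) b)^*) * (Rn (glue k w) * (Rn (glue k' w))^*)))); last first.
    move=> q _; rewrite !glue_upd ?hQnotin //; try lia.
    have e1 : forall X q, upd X (lQ n) q (lA n n) = X (lA n n) := fun X q => upd_other X q h1.
    have e2 : forall X q, upd X (lQ n) q (lA n n.-1) = X (lA n n.-1) := fun X q => upd_other X q h2.
    have e3 : forall X q, upd X (lA n n) q (lA n n.-1) = X (lA n n.-1) := fun X q => upd_other X q h3.
    rewrite !psiR !upd_same !e1 !e2 !e3 !upd_same !g1.
    rewrite !Rn_upd ?g1; try by move=> j hj; rewrite ?lA_neQ ?lA_eq //; lia.
    rewrite !rmorphM /=; ring.
  by rewrite -mulr_suml col_orth // eqxx mul1r.
by rewrite -mulr_suml Umat_orth // mul0r.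
Qed.


Local Notation cfgA := {ffun labAmp n -> 'I_d}.
Local Notation scfgA S := {ffun {l : labAmp n | l \in S} -> 'I_d}.
Local Notation psia := (amp_state alpha B).

Definition unsum (s : 'I_n + 'I_n) : 'I_n := match s with inl i => i | inr i => i end.
Definition ext (c : cfg) : cfgA := [ffun l => c (omap unsum l)].
Definition projA (x : cfgA) : cfg := [ffun l => x (omap inl l)].
Definition gi : labU n -> labAmp n := omap inr.

Lemma ext_g c l : ext c (gi l) = c l.
Proof. by rewrite ffunE; case: l. Qed.

Lemma amp_ext c : psia (ext c) = psi c.
Proof.
rewrite /amp_state.
have -> : [forall k, ext c (Some (inr k)) == ext c (Some (inl k))].
  by apply/forallP => k; rewrite !ffunE.
by congr unamp_state; apply/ffunP => l; rewrite !ffunE; case: l.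
Qed.

Lemma ext_proj (x : cfgA) : [forall k, x (Some (inr k)) == x (Some (inl k))] -> ext (projA x) = x.
Proof.
move/forallP => h; apply/ffunP => -[[i|i]|]; rewrite !ffunE //=.
by apply/eqP; rewrite eq_sym h.
Qed.

Lemma proj_ext c : projA (ext c) = c.
Proof. by apply/ffunP => l; rewrite !ffunE; case: l. Qed.

Lemma sum_ext (F : cfgA -> C) :
  (forall x : cfgA, ~~ [forall k, x (Some (inr k)) == x (Some (inl k))] -> F x = 0) ->
  \sum_x F x = \sum_c F (ext c).
Proof.
move=> hF; rewrite (partition_big projA predT) //=; apply: eq_bigr => c _.
rewrite (bigD1 (ext c)) ?proj_ext //= big1 ?addr0 // => x /andP [/eqP hx hne].
case: (boolP [forall k, x (Some (inr k)) == x (Some (inl k))]) => hf; last exact: hF.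
by move: hne; rewrite -(ext_proj hf) hx eqxx.
Qed.

Lemma amp_offdiag (S2 : {set labAmp n}) (k k' : scfgA S2) :
  (forall l, l \in S2 -> exists i, l = Some (inr i)) -> k != k' ->
  @reduced _ _ _ psia S2 k k' = 0.
Proof.
move=> hS hk; rewrite (reduced_sum _ _ _ k); apply: big1 => w _.
case: (boolP [forall i, glue k w (Some (inr i)) == glue k w (Some (inl i))]) => h;
  last by rewrite /amp_state (negbTE h) mul0r.
case: (boolP [forall i, glue k' w (Some (inr i)) == glue k' w (Some (inl i))]) => h';
  last by rewrite /amp_state (negbTE h') conjC0 mulr0.
exfalso; move/negP: hk; apply; apply/eqP/ffunP => s.
have [i hi] := hS _ (valP s).
have hnot : Some (inl i) \notin S2 by apply/negP => /hS [j].
rewrite -(glue_in k w s) -(glue_in k' w s) hi.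
move/forallP: h => /(_ i) /eqP ->; move/forallP: h' => /(_ i) /eqP ->.
by rewrite !glue_out.
Qed.


Lemma gi_inj : injective gi.
Proof. by move=> [a|] [b|] //= [->]. Qed.

Lemma marg_eq (S1 : {set labU n}) (G : C -> R) :
  \sum_(k : scfgA (gi @: S1)) G (@reduced _ _ _ psia _ k k) =
  \sum_(k : scfg S1) G (@reduced _ _ _ psi _ k k).
Proof.
pose h (k : scfgA (gi @: S1)) : scfg S1 :=
  [ffun s : {l | l \in S1} => k (Sub (gi (val s)) (imset_f gi (valP s)))].
have key : forall c k, (restr (gi @: S1) (ext c) == k) = (restr S1 c == h k).
  move=> c k; apply/eqP/eqP => [<-|hc].
    by apply/ffunP => s; rewrite !ffunE /=; case: (val s).
  apply/ffunP => t; rewrite ffunE.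
  have [l hl ht] := imsetP (valP t).
  have -> : t = Sub (gi l) (imset_f gi hl) by apply: val_inj.
  rewrite /= ext_g.
  have := congr1 (fun f : scfg S1 => f (Sub l hl)) hc; rewrite !ffunE /= => ->.
  by congr (fun_of_fin k); apply: val_inj.
have hq : forall k, @reduced _ _ _ psia _ k k = @reduced _ _ _ psi _ (h k) (h k).
  move=> k; rewrite !reduced_diag big_mkcond /=.
  rewrite (@sum_ext (fun x : cfgA => if restr (gi @: S1) x == k then psia x * (psia x)^* else 0)).
    rewrite [RHS]big_mkcond; apply: eq_bigr => c _.
    by rewrite key amp_ext.
  by move=> x hx; rewrite /amp_state (negbTE hx) mul0r; case: ifP.
have hinj : injective h.
  move=> k1 k2 e; apply/ffunP => t.
  have [l hl ht] := imsetP (valP t).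
  have -> : t = Sub (gi l) (imset_f gi hl) by apply: val_inj.
  have := congr1 (fun f : scfg S1 => f (Sub l hl)) e; rewrite !ffunE /=.
  have -> : (Sub (gi l) (imset_f gi hl) : {x | x \in gi @: S1}) =
    Sub (gi (val (Sub l hl : {x | x \in S1}))) (imset_f gi (valP (Sub l hl : {x | x \in S1}))).
    by apply: val_inj.
  by [].
have hbij : bijective h.
  apply: (@inj_card_bij _ _ h hinj).
  rewrite !card_ffun !card_sig.
  have -> : #|[pred x | x \in gi @: S1]| = #|[pred x | x \in S1]|.
    rewrite (@eq_card _ _ (gi @: S1)) // (@eq_card _ _ S1) //.
    by rewrite card_imset //; exact: gi_inj.
  exact: leqnn.
under eq_bigr do rewrite hq.
by rewrite [RHS](reindex h) //; apply: onW_bij.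
Qed.


Lemma gi_some (S1 : {set labU n}) : (forall l, l \in S1 -> l != None) ->
  forall l, l \in gi @: S1 -> exists i, l = Some (inr i).
Proof.
move=> h l /imsetP [x hx ->]; move: (h x hx); case: x {hx} => [i|] //= _.
by exists i.
Qed.

Lemma main_ineq :
  mutinf psia [set lDa n n] [set lDa n n.-1] <= mutinf psi [set lA n n] [set lA n n.-1].
Proof.
rewrite /mutinf /Ssub.
have eDn : [set lDa n n] = gi @: [set lA n n] by rewrite imset_set1.
have eDn1 : [set lDa n n.-1] = gi @: [set lA n n.-1] by rewrite imset_set1.
rewrite eDn eDn1 -imsetU.
set b : R := d%:R.
have hb : 1 <= b by rewrite /b ler1n.
have E1 : forall S1 : {set labU n}, (forall l, l \in S1 -> l != None) ->
   vN_entropy b (opmx (@reduced _ _ _ psia (gi @: S1))) =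
   - \sum_k xlogx b (complex.Re (@reduced _ _ _ psi S1 k k)).
  move=> S1 hS1; rewrite vN_diag; last first.
    by move=> k k' hk; apply: amp_offdiag => //; apply: gi_some.
  by rewrite (marg_eq S1 (fun z => xlogx b (complex.Re z))).
have hsome : forall j, (j <= n)%N -> forall l, l \in [set lA n j] -> l != None.
  by move=> j hj l /set1P ->; apply: lA_neQ.
have hsomeU : forall l, l \in [set lA n n] :|: [set lA n n.-1] -> l != None.
  move=> l; rewrite in_setU => /orP [] hl; first exact: (hsome n _ l hl).
  by apply: (hsome n.-1 _ l hl); lia.
rewrite (E1 _ hsomeU) (E1 _ (hsome n (leqnn n))) (E1 _ (hsome n.-1 (leq_pred n))).
rewrite (vN_diag _ offdiag_An) (vN_diag _ offdiag_An1).
have := vN_reduced_le (b := b) psi ([set lA n n] :|: [set lA n n.-1]) hd hb.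
lra.
Qed.

End P8.

Unset Implicit Arguments.

Theorem theorem5 (R : realType) (n d : nat) (hn : (2 <= n)%N) (hd : (0 < d)%N)
  (alpha : 'I_d -> R[i]) (B : nat -> 'M[R[i]]_d) :
  \sum_(x : 'I_d) alpha x * (alpha x)^* = 1 ->
  (forall i : nat, (1 <= i <= n)%N -> unitary (B i)) ->
  mutinf (amp_state alpha B) [set lDa n n] [set lDa n n.-1]
    <= mutinf (unamp_state alpha B) [set lA n n] [set lA n n.-1].
Proof.
move=> _ hU; exact: main_ineq.
Qed.
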